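(* Let $G=(V,E)$ be a simple, unoriented, locally finite graph with graph distance $d$, and let $x\neq x'$ be two vertices at finite distance, each of positive degree. Then for every $t\in(0,1/2]$, $$\operatorname{ric}(x,x')=\frac{\kappa^t(x,x')}{t}.$$
   Context: For a vertex $x$, $S_x$ is the set of neighbours of $x$, $d_x=|S_x|$, and $d$ is the graph distance (length of a shortest edge path). The lazy random walk $\mu^t_x$ is the probability measure with $\mu^t_x(x)=1-t$, $\mu^t_x(y)=t/d_x$ for $y\in S_x$, and $0$ elsewhere. A coupling between probability measures $\mu,\mu'$ on $V$ is a nonnegative function $\xi$ on $V\times V$ with marginals $\mu$ and $\mu'$. The Wasserstein distance is $W_1(\mu,\mu')=\inf_\xi\sum_{y,y'}\xi(y,y')d(y,y')$, the infimum over all couplings. Set $\kappa^t(x,x')=1-\frac{W_1(\mu^t_x,\mu^t_{x'})}{d(x,x')}$ and define the (asymptotic) Ollivier–Ricci curvature $\operatorname{ric}(x,x')=\liminf_{t\to0^+}\kappa^t(x,x')/t$. *)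

(* Defs.v *)
From HB Require Import structures.
From mathcomp Require Import all_boot all_order all_algebra.
From mathcomp Require Import finmap.
From mathcomp Require Import all_classical all_reals all_analysis.
Set Implicit Arguments. Unset Strict Implicit. Unset Printing Implicit Defensive.
Import Order.TTheory GRing.Theory Num.Theory.
Import numFieldNormedType.Exports.
Local Open Scope classical_set_scope.
Local Open Scope ring_scope.

(* A locally finite graph on the vertex type V is given by its neighbour
   function: S_x = nbr x is a finite set. *)
Definition simple_graph (V : choiceType) (nbr : V -> {fset V}) : Prop :=
  (forall x y : V, (y \in nbr x) = (x \in nbr y)) /\
  (forall x : V, x \notin nbr x).

Definition deg (V : choiceType) (nbr : V -> {fset V}) (x : V) : nat :=
  #|` nbr x|%fset.

Fixpoint walk (V : choiceType) (nbr : V -> {fset V}) (n : nat) (x y : V) : Prop :=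
  match n with
  | 0 => x = y
  | k.+1 => exists2 z, z \in nbr x & walk nbr k z y
  end.

(* graph distance (+oo if no path) *)
Definition gdist (R : realType) (V : choiceType) (nbr : V -> {fset V}) (x y : V)
  : \bar R :=
  ereal_inf [set (n%:R)%:E | n in [set n | walk nbr n x y]].

Definition lazy_rw (R : realType) (V : choiceType) (nbr : V -> {fset V})
  (t : R) (x : V) (y : V) : R :=
  if y == x then 1 - t
  else if y \in nbr x then t / (deg nbr x)%:R else 0.

Definition coupling (R : realType) (V : choiceType) (mu mu' : V -> R)
  (xi : V -> V -> R) : Prop :=
  (forall y y', 0 <= xi y y') /\
  (forall y, (\esum_(y' in [set: V]) (xi y y')%:E = (mu y)%:E)%E) /\
  (forall y', (\esum_(y in [set: V]) (xi y y')%:E = (mu' y')%:E)%E).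

Definition W1 (R : realType) (V : choiceType) (nbr : V -> {fset V})
  (mu mu' : V -> R) : \bar R :=
  ereal_inf [set (\esum_(p in [set: V * V])
                    ((xi p.1 p.2)%:E * gdist R nbr p.1 p.2))%E
            | xi in [set xi | coupling mu mu' xi]].

(* kappa^t(x,x') = 1 - W1(mu^t_x, mu^t_x') / d(x,x')  (both quantities are
   finite in the situation of interest; fine maps them to R) *)
Definition kappa (R : realType) (V : choiceType) (nbr : V -> {fset V})
  (t : R) (x x' : V) : R :=
  1 - fine (W1 nbr (lazy_rw nbr t x) (lazy_rw nbr t x'))
      / fine (gdist R nbr x x').

Definition ric (R : realType) (V : choiceType) (nbr : V -> {fset V})
  (x x' : V) : \bar R :=
  limf_einf (fun t : R => (kappa nbr t x x' / t)%:E) (0^'+).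

(* Main.v *)
Require Import Defs.
From HB Require Import structures.
From mathcomp Require Import all_boot all_order all_algebra.
From mathcomp Require Import finmap.
From mathcomp Require Import all_classical all_reals all_analysis.
From mathcomp Require Import zify ring lra.
Import Order.TTheory GRing.Theory Num.Theory.
Import numFieldNormedType.Exports.
Local Open Scope classical_set_scope.
Local Open Scope ring_scope.

Lemma walk_cat (V : choiceType) (nbr : V -> {fset V}) m n a b c :
  walk nbr m a b -> walk nbr n b c -> walk nbr (m + n) a c.
Proof.
elim: m a => [|m IH] a /=; first by move=> ->.
by case=> z za zb bc; exists z => //; apply: IH.
Qed.

Lemma gdist_le (R : realType) (V : choiceType) (nbr : V -> {fset V}) n a b :
  walk nbr n a b -> (gdist R nbr a b <= (n%:R)%:E)%E.
Proof. by move=> w; apply: ereal_inf_lbound; exists n. Qed.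
Arguments walk_cat {V nbr m n a b c}.

Lemma gdist_ge0 (R : realType) (V : choiceType) (nbr : V -> {fset V}) a b :
  (0 <= gdist R nbr a b)%E.
Proof. by apply: le_ereal_inf_tmp => _ [n _ <-]; rewrite lee_fin. Qed.

Lemma gdist_ge1 (R : realType) (V : choiceType) (nbr : V -> {fset V}) a b :
  a != b -> (1 <= gdist R nbr a b)%E.
Proof.
move=> ab; apply: le_ereal_inf_tmp => _ [[|n] /= w <-].
  by rewrite w eqxx in ab.
by rewrite lee_fin ler1n.
Qed.

Lemma gdist_near (R : realType) (V : choiceType) (nbr : V -> {fset V}) x x' y y' :
  simple_graph nbr ->
  (y == x) || (y \in nbr x) -> (y' == x') || (y' \in nbr x') ->
  (gdist R nbr y y' <= gdist R nbr x x' + 2%:E)%E.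
Proof.
move=> [sym _] hy hy'.
have [k1 k1le w1] : exists2 k, (k <= 1)%N & walk nbr k y x.
  case/orP: hy => [/eqP->|yx]; first by exists 0%N.
  exists 1%N => //=; exists x => //; by rewrite -sym.
have [k2 k2le w2] : exists2 k, (k <= 1)%N & walk nbr k x' y'.
  case/orP: hy' => [/eqP->|yx]; first by exists 0%N.
  by exists 1%N => //=; exists y'.
rewrite -leeBlDr //; apply: le_ereal_inf_tmp => _ [n /= w <-].
rewrite EFinN leeBlDr // -EFinD.
apply: (le_trans (@gdist_le R V nbr _ _ _ (walk_cat (walk_cat w1 w) w2))).
rewrite lee_fin -natrD ler_nat; lia.
Qed.

Local Open Scope ereal_scope.

Lemma esumZl (R : realType) (T : choiceType) (S : set T) (r : R) (f : T -> \bar R) :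
  (0 <= r)%R -> (forall i, 0 <= f i) ->
  \esum_(i in S) (r%:E * f i) = r%:E * \esum_(i in S) f i.
Proof.
move=> r0 f0; rewrite /esum -ereal_supZl //; last first.
  by apply/set0P; exists 0; exists set0; [exact: fsets_set0|rewrite fsbig_set0].
congr ereal_sup; rewrite image_comp; apply: eq_imagel => A _ /=.
by rewrite ge0_mule_fsumr.
Qed.

Lemma esum_pt (R : realType) (T : choiceType) (p0 : T) (e : \bar R) :
  0 <= e -> \esum_(i in [set: T]) (if i == p0 then e else 0) = e.
Proof.
move=> e0; rewrite -[RHS](@esum_set1 R T p0 (fun _ => e)) //.
rewrite [RHS]esum_mkcond; apply: eq_esum => i _.
by rewrite in_set1.
Qed.

Lemma esum_fsetc (R : realType) (T : choiceType) (A : {fset T}) (c : R) :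
  (0 <= c)%R ->
  \esum_(i in [set: T]) (if i \in A then c%:E else 0) = (c *+ #|` A|%fset)%:E.
Proof.
move=> c0.
transitivity (\esum_(i in [set` A]) (c%:E : \bar R)).
  by rewrite [RHS]esum_mkcond; apply: eq_esum => i _; rewrite mem_setE.
rewrite (@esum_fset R T [set` A] (fun _ => c%:E)) //.
rewrite fsbig_finite //= set_fsetK sumEFin big_const_seq count_predT.
by rewrite iter_addr addr0.
Qed.

Lemma le_esum1 (R : realType) (T : choiceType) (f : T -> \bar R) p :
  (forall i, 0 <= f i) -> f p <= \esum_(i in [set: T]) f i.
Proof.
move=> f0; apply: esum_ge; exists [set p]; first by split => //; exact: finite_set1.
by rewrite fsbig_set1.
Qed.

Lemma lazy_ge0 (R : realType) (V : choiceType) (nbr : V -> {fset V}) (t : R) z y :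
  (0 <= t <= 1)%R -> (0 <= lazy_rw nbr t z y)%R.
Proof.
case/andP=> t0 t1; rewrite /lazy_rw; case: ifP => _; first by rewrite subr_ge0.
by case: ifP => // _; rewrite divr_ge0.
Qed.

Lemma lazy_mix (R : realType) (V : choiceType) (nbr : V -> {fset V}) (t : R) z y :
  lazy_rw nbr t z y = ((1 - 2 * t) * (y == z)%:R + 2 * t * lazy_rw nbr (1/2) z y)%R.
Proof.
rewrite /lazy_rw; case: ifP => _; first by rewrite mulr1; field.
rewrite mulr0 add0r; case: ifP => _; last by rewrite mulr0.
have e : (2 * t * (1 / 2) = t :> R)%R by field.
by rewrite mulrA e.
Qed.

Lemma nbr_mass (R : realType) (V : choiceType) (nbr : V -> {fset V}) (t : R) z :
  simple_graph nbr -> (0 <= t)%R -> (0 < deg nbr z)%N ->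
  \esum_(v in [set: V]) ((if v == z then 0 else lazy_rw nbr t z v)%R)%:E = t%:E.
Proof.
move=> [_ irr] t0 dz.
transitivity (\esum_(v in [set: V]) (if v \in nbr z then (t / (deg nbr z)%:R)%:E else 0)).
  apply: eq_esum => v _; rewrite /lazy_rw.
  case: eqP => [->|_]; first by rewrite (negPf (irr z)).
  by case: ifP.
rewrite esum_fsetc ?divr_ge0 //; congr EFin.
rewrite -[#|` nbr z|%fset]/(deg nbr z) -(mulr_natr (t / _)) divfK //.
by rewrite pnatr_eq0 -lt0n.
Qed.

Lemma mass1 (R : realType) (V : choiceType) (nbr : V -> {fset V}) (t : R) z :
  simple_graph nbr -> (0 <= t <= 1)%R -> (0 < deg nbr z)%N ->
  \esum_(v in [set: V]) (lazy_rw nbr t z v)%:E = 1.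
Proof.
move=> G /andP[t0 t1] dz.
transitivity (\esum_(v in [set: V]) ((if v == z then (1 - t)%:E else 0) +
    ((if v == z then 0 else lazy_rw nbr t z v)%R)%:E)).
  apply: eq_esum => v _; rewrite /lazy_rw.
  by case: eqP => _; rewrite ?adde0 ?add0e.
rewrite esumD; last 2 first.
- by move=> v _; case: ifP => _ //; rewrite lee_fin subr_ge0.
- by move=> v _; rewrite lee_fin; case: ifP => _ //; apply: lazy_ge0; rewrite t0.
rewrite esum_pt ?lee_fin ?subr_ge0 // nbr_mass // -EFinD subrK //.
Qed.

Definition mixc (R : realType) (V : choiceType) (x x' : V) (t : R)
  (eta : V -> V -> R) : V -> V -> R :=
  fun y y' => ((1 - 2 * t) * ((y, y') == (x, x'))%:R + 2 * t * eta y y')%R.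
Arguments mixc {R V}.

Lemma mix_row (R : realType) (V : choiceType) (x x' : V) (t : R) (eta : V -> V -> R) y :
  (0 <= 1 - 2 * t)%R -> (0 < t)%R -> (forall y y', 0 <= eta y y')%R ->
  \esum_(y' in [set: V]) (mixc x x' t eta y y')%:E =
  ((1 - 2 * t) * (y == x)%:R)%:E + (2 * t)%:E * \esum_(y' in [set: V]) (eta y y')%:E.
Proof.
move=> h1 t0 e0.
transitivity (\esum_(y' in [set: V]) ((if y' == x' then ((1 - 2 * t) * (y == x)%:R)%:E else 0)
   + (2 * t)%:E * (eta y y')%:E)).
  apply: eq_esum => y' _; rewrite /mixc xpair_eqE.
  by case: (y' == x'); rewrite ?andbT ?andbF /= ?mulr0 ?add0r ?EFinD EFinM ?add0e.
rewrite esumD; last 2 first.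
- by move=> v _; case: ifP => _ //; rewrite lee_fin mulr_ge0.
- by move=> v _; rewrite -EFinM lee_fin mulr_ge0 // mulr_ge0 // ltW.
rewrite esum_pt ?lee_fin ?mulr_ge0 // esumZl // ?mulr_ge0 ?ltW //.
by move=> v; rewrite lee_fin.
Qed.

Lemma mix_col (R : realType) (V : choiceType) (x x' : V) (t : R) (eta : V -> V -> R) y' :
  (0 <= 1 - 2 * t)%R -> (0 < t)%R -> (forall y y', 0 <= eta y y')%R ->
  \esum_(y in [set: V]) (mixc x x' t eta y y')%:E =
  ((1 - 2 * t) * (y' == x')%:R)%:E + (2 * t)%:E * \esum_(y in [set: V]) (eta y y')%:E.
Proof.
move=> h1 t0 e0.
transitivity (\esum_(y in [set: V]) ((if y == x then ((1 - 2 * t) * (y' == x')%:R)%:E else 0)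
   + (2 * t)%:E * (eta y y')%:E)).
  apply: eq_esum => y _; rewrite /mixc xpair_eqE.
  by case: (y == x); rewrite ?andbT ?andbF /= ?mul0r ?mulr0 ?add0r ?EFinD EFinM ?add0e.
rewrite esumD; last 2 first.
- by move=> v _; case: ifP => _ //; rewrite lee_fin mulr_ge0.
- by move=> v _; rewrite -EFinM lee_fin mulr_ge0 // mulr_ge0 // ltW.
rewrite esum_pt ?lee_fin ?mulr_ge0 // esumZl // ?mulr_ge0 ?ltW //.
by move=> v; rewrite lee_fin.
Qed.

Lemma mix_cost (R : realType) (V : choiceType) (nbr : V -> {fset V}) (x x' : V) (t : R) (eta : V -> V -> R) :
  (0 <= 1 - 2 * t)%R -> (0 < t)%R -> (forall y y', 0 <= eta y y')%R ->
  \esum_(p in [set: V * V]) ((mixc x x' t eta p.1 p.2)%:E * gdist R nbr p.1 p.2) =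
  (1 - 2 * t)%:E * gdist R nbr x x' +
  (2 * t)%:E * \esum_(p in [set: V * V]) ((eta p.1 p.2)%:E * gdist R nbr p.1 p.2).
Proof.
move=> h1 t0 e0.
transitivity (\esum_(p in [set: V * V])
   ((if p == (x, x') then (1 - 2 * t)%:E * gdist R nbr x x' else 0)
   + (2 * t)%:E * ((eta p.1 p.2)%:E * gdist R nbr p.1 p.2))).
  apply: eq_esum => -[y y'] _ /=; rewrite /mixc EFinD ge0_muleDl; last 2 first.
  - by rewrite lee_fin mulr_ge0.
  - by rewrite lee_fin mulr_ge0 // mulr_ge0 // ltW.
  rewrite EFinM -muleA [in X in _ + X]EFinM -muleA.
  case: eqP => [[-> ->]|_]; first by rewrite mul1e.
  by rewrite mul0e mule0 add0e.
rewrite esumD; last 2 first.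
- by move=> v _; case: ifP => _ //; rewrite mule_ge0 ?lee_fin ?gdist_ge0.
- move=> v _; apply: mule_ge0; first by rewrite lee_fin mulr_ge0 // ltW.
  by apply: mule_ge0; rewrite ?lee_fin ?gdist_ge0.
rewrite esum_pt ?mule_ge0 ?lee_fin ?gdist_ge0 // esumZl // ?mulr_ge0 ?ltW //.
by move=> v; rewrite mule_ge0 ?lee_fin ?gdist_ge0.
Qed.

Lemma mixc_ge0 (R : realType) (V : choiceType) (x x' : V) (t : R) (eta : V -> V -> R) y y' :
  (0 <= 1 - 2 * t)%R -> (0 < t)%R -> (forall y y', 0 <= eta y y')%R ->
  (0 <= mixc x x' t eta y y')%R.
Proof.
move=> h1 t0 e0; rewrite /mixc addr_ge0 // ?mulr_ge0 // ?ltW //.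
Qed.

Lemma mix_coupling (R : realType) (V : choiceType) (nbr : V -> {fset V}) (x x' : V) (t : R)
  (eta : V -> V -> R) :
  (0 <= 1 - 2 * t)%R -> (0 < t)%R ->
  coupling (lazy_rw nbr (1/2) x) (lazy_rw nbr (1/2) x') eta ->
  coupling (lazy_rw nbr t x) (lazy_rw nbr t x') (mixc x x' t eta).
Proof.
move=> h1 t0 [e0 [er ec]]; split; first by move=> y y'; apply: mixc_ge0.
split.
- by move=> y; rewrite mix_row // er -EFinM -EFinD -lazy_mix.
- by move=> y'; rewrite mix_col // ec -EFinM -EFinD -lazy_mix.
Qed.

Lemma cancelE (R : realType) (a c b : R) (E : \bar R) :
  (0 < c)%R -> a%:E + c%:E * E = (a + c * b)%:E -> E = b%:E.
Proof.
move=> c0; case: E => [e| |] /=.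
- rewrite -EFinM -EFinD => -[] /addrI /(mulfI (lt0r_neq0 c0)) -> //.
- by rewrite muleC gt0_mulye ?lte_fin.
- by rewrite muleC gt0_mulNye ?lte_fin.
Qed.

Lemma key_ineq (R : realType) (V : choiceType) (nbr : V -> {fset V}) (x x' : V) (t : R)
  (xi : V -> V -> R) :
  simple_graph nbr -> (0 < deg nbr x')%N -> (0 <= t <= 1)%R ->
  coupling (lazy_rw nbr t x) (lazy_rw nbr t x') xi -> (1 - 2 * t <= xi x x')%R.
Proof.
move=> G dx' /andP[t0 t1] [x0 [er ec]].
have : ((1 - t)%:E <= (xi x x')%:E + t%:E).
  have -> : (1 - t)%R = lazy_rw nbr t x x by rewrite /lazy_rw eqxx.
  rewrite -er -(@nbr_mass R V nbr t x' G t0 dx').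
  rewrite -[X in X + _](@esum_pt R V x' ((xi x x')%:E)) ?lee_fin //.
  rewrite -esumD; last 2 first.
  - by move=> v _; case: ifP => _ //; rewrite lee_fin.
  - by move=> v _; rewrite lee_fin; case: ifP => _ //; apply: lazy_ge0; rewrite t0.
  apply: le_esum => v _; case: eqP => [->|_]; first by rewrite adde0.
  rewrite add0e -ec; apply: (@le_esum1 R V (fun u => (xi u v)%:E)) => u.
  by rewrite lee_fin.
by rewrite -EFinD lee_fin; lra.
Qed.

Lemma ereal_inf_shift_ge (R : realType) (a : \bar R) (X : set (\bar R)) :
  a + ereal_inf X <= ereal_inf [set a + x | x in X].
Proof.
apply: le_ereal_inf_tmp => _ [y Xy <-]; apply: leeD2l.
exact: ereal_inf_lbound.
Qed.

Lemma ereal_inf_shift (R : realType) (a : \bar R) (X : set (\bar R)) :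
  a \is a fin_num -> ereal_inf [set a + x | x in X] = a + ereal_inf X.
Proof.
move=> af; apply/eqP; rewrite eq_le ereal_inf_shift_ge andbT.
have := @ereal_inf_shift_ge R (- a) [set a + x | x in X].
rewrite image_comp.
have -> : ((fun x => - a + x) \o (fun x => a + x)) = id.
  by apply/funext => y /=; rewrite addeA (addeC (- a)) subee // add0e.
rewrite image_id addeC leeBlDr // addeC //.
Qed.

Lemma decomp (R : realType) (V : choiceType) (nbr : V -> {fset V}) (x x' : V) (t : R)
  (xi : V -> V -> R) :
  simple_graph nbr -> (0 < deg nbr x')%N -> (0 < t)%R -> (t <= 1/2)%R ->
  coupling (lazy_rw nbr t x) (lazy_rw nbr t x') xi ->
  let eta := fun y y' => ((xi y y' - (1 - 2 * t) * ((y, y') == (x, x'))%:R) / (2 * t))%R in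
  (forall y y', xi y y' = mixc x x' t eta y y') /\
  coupling (lazy_rw nbr (1/2) x) (lazy_rw nbr (1/2) x') eta.
Proof.
move=> G dx' t0 th C eta.
have t1 : (0 <= t <= 1)%R by apply/andP; split; lra.
have h1 : (0 <= 1 - 2 * t)%R by lra.
have key := @key_ineq R V nbr x x' t xi G dx' t1 C.
case: C => [x0 [er ec]].
have idx : forall y y', xi y y' = mixc x x' t eta y y'.
  by move=> y y'; rewrite /mixc /eta; field; lra.
have e0 : forall y y', (0 <= eta y y')%R.
  move=> y y'; rewrite /eta divr_ge0 //; last by lra.
  case: eqP => [[-> ->]|_]; first by rewrite mulr1 subr_ge0.
  by rewrite mulr0 subr0.
split => //; split => //; split.
- move=> y; apply: (@cancelE R ((1 - 2 * t) * (y == x)%:R) (2 * t)); first lra.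
  rewrite -(@mix_row R V x x' t eta y) // -(@lazy_mix R V nbr t x y) -er; apply: eq_esum => y' _.
  by rewrite idx.
- move=> y'; apply: (@cancelE R ((1 - 2 * t) * (y' == x')%:R) (2 * t)); first lra.
  rewrite -(@mix_col R V x x' t eta y') // -(@lazy_mix R V nbr t x' y') -ec; apply: eq_esum => y _.
  by rewrite idx.
Qed.

Lemma W1_mix (R : realType) (V : choiceType) (nbr : V -> {fset V}) (x x' : V) (t : R) :
  simple_graph nbr -> (0 < deg nbr x')%N -> (0 < t)%R -> (t <= 1/2)%R ->
  gdist R nbr x x' \is a fin_num ->
  W1 nbr (lazy_rw nbr t x) (lazy_rw nbr t x') =
  (1 - 2 * t)%:E * gdist R nbr x x' +
  (2 * t)%:E * W1 nbr (lazy_rw nbr (1/2) x) (lazy_rw nbr (1/2) x').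
Proof.
move=> G dx' t0 th df.
have h1 : (0 <= 1 - 2 * t)%R by lra.
have t2 : (0 < 2 * t)%R by lra.
rewrite /W1 -(@ereal_inf_pZl R _ (2 * t)) //.
rewrite -(@ereal_inf_shift R ((1 - 2 * t)%:E * gdist R nbr x x')); last by rewrite fin_numM.
congr ereal_inf; apply/seteqP; split.
- move=> _ [xi Cxi <-].
  have [idx Ce] := @decomp R V nbr x x' t xi G dx' t0 th Cxi.
  set eta := (X in coupling _ _ X) in Ce.
  exists ((2 * t)%:E * \esum_(p in [set: V * V]) ((eta p.1 p.2)%:E * gdist R nbr p.1 p.2)).
    by exists (\esum_(p in [set: V * V]) ((eta p.1 p.2)%:E * gdist R nbr p.1 p.2)) => //;
      exists eta.
  rewrite -mix_cost //; last by case: Ce.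
  by apply: eq_esum => p _; rewrite idx.
- move=> _ [_ [_ [eta Ce <-] <-] <-].
  exists (mixc x x' t eta); first exact: mix_coupling.
  by rewrite mix_cost //; case: Ce.
Qed.

Lemma lazy_supp (R : realType) (V : choiceType) (nbr : V -> {fset V}) (t : R) z y :
  lazy_rw nbr t z y != 0%R -> (y == z) || (y \in nbr z).
Proof.
rewrite /lazy_rw; case: (y == z) => //=; case: (y \in nbr z) => //=.
by rewrite eqxx.
Qed.

Lemma W1_ge0 (R : realType) (V : choiceType) (nbr : V -> {fset V}) (mu mu' : V -> R) :
  0 <= W1 nbr mu mu'.
Proof.
apply: le_ereal_inf_tmp => _ [xi [x0 _] <-]; apply: esum_ge0 => p _.
by apply: mule_ge0; rewrite ?lee_fin ?gdist_ge0.
Qed.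

Lemma setT_prod (V : choiceType) : [set: V] `*`` (fun _ => [set: V]) = [set: V * V].
Proof. by apply/seteqP; split. Qed.

Lemma W1_half_fin (R : realType) (V : choiceType) (nbr : V -> {fset V}) (x x' : V) :
  simple_graph nbr -> (0 < deg nbr x)%N -> (0 < deg nbr x')%N ->
  gdist R nbr x x' \is a fin_num ->
  W1 nbr (lazy_rw nbr (1/2 : R) x) (lazy_rw nbr (1/2 : R) x') \is a fin_num.
Proof.
move=> G dx dx' df.
have hh : (0 <= (1/2 : R) <= 1)%R by apply/andP; split; lra.
set mu := lazy_rw nbr (1/2) x; set mu' := lazy_rw nbr (1/2) x'.
have m0 y : (0 <= mu y)%R by apply: lazy_ge0.
have m0' y : (0 <= mu' y)%R by apply: lazy_ge0.
have M1 : \esum_(v in [set: V]) (mu v)%:E = 1 by apply: mass1.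
have M1' : \esum_(v in [set: V]) (mu' v)%:E = 1 by apply: mass1.
pose pi := fun y y' => (mu y * mu' y')%R.
have Cpi : coupling mu mu' pi.
  split; first by move=> y y'; rewrite mulr_ge0.
  split.
  - move=> y; rewrite /pi; under eq_esum do rewrite EFinM.
    by rewrite esumZl ?M1' ?mule1 // => v; rewrite lee_fin.
  - move=> y'; rewrite /pi; under eq_esum do rewrite mulrC EFinM.
    by rewrite esumZl ?M1 ?mule1 // => v; rewrite lee_fin.
rewrite ge0_fin_numE ?W1_ge0 //.
apply: (@le_lt_trans _ _ (\esum_(p in [set: V * V]) ((pi p.1 p.2)%:E * gdist R nbr p.1 p.2))).
  by apply: ereal_inf_lbound; exists pi.
apply: (@le_lt_trans _ _ (\esum_(p in [set: V * V]) ((gdist R nbr x x' + 2%:E) * (pi p.1 p.2)%:E))).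
  apply: le_esum => -[y y'] _ /=; rewrite muleC.
  have [->|pn0] := eqVneq (pi y y') 0%R; first by rewrite !mule0.
  apply: lee_wpmul2r; first by rewrite lee_fin mulr_ge0.
  apply: gdist_near => //; apply: (@lazy_supp R V nbr (1/2)).
  - by apply: contraNneq pn0 => e; rewrite /pi /mu e mul0r.
  - by apply: contraNneq pn0 => e; rewrite /pi /mu' e mulr0.
have [D Dq] : exists D, gdist R nbr x x' = D%:E by case: (gdist R nbr x x') df => // D; exists D.
rewrite Dq.
rewrite -EFinD esumZl; last first.
  by move=> p; rewrite lee_fin mulr_ge0.
  have := @gdist_ge0 R V nbr x x'; rewrite Dq lee_fin => D0; lra.
have -> : \esum_(p in [set: V * V]) (pi p.1 p.2)%:E = 1.
  transitivity (\esum_(k in [set: V] `*`` (fun _ => [set: V])) (pi k.1 k.2)%:E).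
    by rewrite setT_prod.
  rewrite -(@esum_esum R V V setT (fun _ => setT) (fun y y' => (pi y y')%:E)); last by move=> *; rewrite lee_fin mulr_ge0.
  rewrite /pi; under eq_esum do (under eq_esum do rewrite EFinM; rewrite esumZl ?M1' ?mule1 //).
  by rewrite M1.
by rewrite mule1 ltry.
Qed.

Lemma limf_einf_ev (R : realType) (f : R -> \bar R) (c : \bar R) :
  (forall s, (0 < s <= 1/2)%R -> f s = c) -> limf_einf f (0%R^'+) = c.
Proof.
move=> fc.
have W : \forall s \near (0%R : R)^'+, (0 < s <= 1/2)%R.
  near=> s; apply/andP; split; near: s; first exact: nbhs_right_gt.
  by apply: nbhs_right_le; lra.
rewrite limf_einfE; apply/eqP; rewrite eq_le; apply/andP; split.
- apply: ge_ereal_sup => _ [A FA <-].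
  have [s [As Ws]] : exists s, A s /\ (0 < s <= 1/2)%R.
    by apply: (filter_ex (filterI FA W)).
  by apply: ge_ereal_inf; exists (f s); [exists s|rewrite fc].
- apply: le_ereal_sup_tmp; exists (ereal_inf (f @` [set s | (0 < s <= 1/2)%R])).
    by exists [set s | (0 < s <= 1/2)%R].
  by apply: le_ereal_inf_tmp => _ [s Ws <-]; rewrite fc.
Unshelve. all: end_near.
Qed.

Local Close Scope ereal_scope.

Theorem proposition1 (R : realType) (V : choiceType) (nbr : V -> {fset V})
  (x x' : V) :
  simple_graph nbr ->
  x != x' ->
  gdist R nbr x x' != +oo%E ->
  (0 < deg nbr x)%N -> (0 < deg nbr x')%N ->
  forall t : R, 0 < t <= 1 / 2 ->
  ric R nbr x x' = (kappa nbr t x x' / t)%:E.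
Proof.
move=> G xx' dinf dx dx' t /andP[t0 th].
have d1 := @gdist_ge1 R V nbr x x' xx'.
have [D Dq] : exists D, gdist R nbr x x' = D%:E.
  move: dinf d1; case: (gdist R nbr x x') => // D _ _; by exists D.
have D1 : (1 <= D)%R by rewrite -lee_fin -Dq.
have df : gdist R nbr x x' \is a fin_num by rewrite Dq.
have [w Wq] : exists w, W1 nbr (lazy_rw nbr (1/2 : R) x) (lazy_rw nbr (1/2 : R) x') = w%:E.
  move: (@W1_half_fin R V nbr x x' G dx dx' df).
  case: (W1 nbr (lazy_rw nbr (1/2 : R) x) (lazy_rw nbr (1/2 : R) x')) => // w _; by exists w.
have K : forall s, (0 < s <= 1/2)%R -> (kappa nbr s x x' / s = 2 * (1 - w / D))%R.
  move=> s /andP[s0 sh]; rewrite /kappa W1_mix // Dq Wq -!EFinM -EFinD /=.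
  field; apply/andP; split; lra.
rewrite K ?t0 //; rewrite /ric; apply: limf_einf_ev => s hs.
by rewrite K.
Qed.
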